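(* With $p=(z-w)^2$ and notation as in the context, for integers $k\ge 2$ and $n\ge 0$: \[ \langle w^k\phi_n,z^k\psi_n\rangle=\begin{cases}0, & n\le k-3,\\[2pt] \dfrac{A^n_{0,n}A^n_{n,0}}{D_nD_{n+1}}, & n=k-2,\\[6pt] \dfrac{-A^{n+1}_{0,n+1}A^n_{n,n+1-k}+A^n_{0,n}A^n_{n,n+2-k}}{D_nD_{n+1}}, & n\ge k-1.\end{cases} \] Consequently, for every $k\ge3$, \[ \Sigma_k=\sum_{n=k-2}^\infty\left(\frac{2(n+3-k)(n^2+5n+4+3k-3k^2)}{(n+1)(n+2)(n+3)(n+4)}\right)^2 . \]
   Context: $H^2(\mathbb D^2)$ is the Hardy space on the bidisk (monomials $z^aw^b$ orthonormal). Let $p=(z-w)^2$ and $M=[p]$ the smallest closed subspace containing $p$ invariant under multiplication by $z$ and $w$. For $n\ge0$ let $A^n=(a_{i,j})_{i,j=0}^n$ with $a_{i,j}=\langle pw^{|i-j|},pz^{|i-j|}\rangle$ (the symmetric pentadiagonal Toeplitz matrix with diagonal $6$, first off-diagonals $-4$, second off-diagonals $1$); $D_0=1$, $D_n=\det A^{n-1}$ ($n\ge1$); $A^n_{i,j}$ is the $(i,j)$ cofactor of $A^n$ ($(-1)^{i+j}$ times the minor deleting row $i$ and column $j$; $A^0_{0,0}=1$). Define $\phi_0=\psi_0=p/\|p\|$ and for $n\ge1$ $\phi_n=\frac{\sum_{j=0}^n pA^n_{0,j}z^jw^{n-j}}{\sqrt{D_{n+1}D_n}}$, $\psi_n=\frac{\sum_{j=0}^n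 pA^n_{n,j}z^jw^{n-j}}{\sqrt{D_{n+1}D_n}}$ (orthonormal bases of $M\ominus zM$ and $M\ominus wM$). For $k\ge0$, $\Sigma_k:=\sum_{n\ge0}|\langle w^k\phi_n,z^k\psi_n\rangle|^2$. *)

(* Defs.v *)
From HB Require Import structures.
From mathcomp Require Import all_boot all_order all_algebra.
From mathcomp Require Import all_classical all_reals all_analysis.
Set Implicit Arguments. Unset Strict Implicit. Unset Printing Implicit Defensive.
Import Order.TTheory GRing.Theory Num.Theory.
Local Open Scope ring_scope.

Section HardyBidisk.
Variable R : realType.

(* Polynomials in two variables z, w: P : {poly {poly R}}, where the outer
   variable is z and the inner one is w; the coefficient of z^a w^b is
   (P`_a)`_b. *)
Definition bipoly := {poly {poly R}}.
Definition zv : bipoly := 'X.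
Definition wv : bipoly := ('X)%:P.
Definition cst (c : R) : bipoly := c%:P%:P.
Definition coef2 (P : bipoly) (a b : nat) : R := (P`_a)`_b.

(* H^2(D^2) inner product restricted to polynomials (monomials orthonormal);
   all polynomials here have real coefficients, so no conjugation. *)
Definition ip (P Q : bipoly) : R :=
  \sum_(a < size P) \sum_(b < size P`_a) coef2 P a b * coef2 Q a b.

Definition pp : bipoly := (zv - wv) ^+ 2.

Definition Amx (n : nat) : 'M[R]_n.+1 :=
  \matrix_(i < n.+1, j < n.+1)
     ip (pp * wv ^+ (maxn i j - minn i j)) (pp * zv ^+ (maxn i j - minn i j)).

Definition Dn (n : nat) : R := if n is m.+1 then \det (Amx m) else 1.

Definition Acof (n i j : nat) : R := cofactor (Amx n) (inord i) (inord j).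

Definition phi (n : nat) : bipoly :=
  if n is 0 then cst (Num.sqrt (ip pp pp))^-1 * pp
  else cst (Num.sqrt (Dn n.+1 * Dn n))^-1 *
       \sum_(j < n.+1) pp * cst (Acof n 0 j) * zv ^+ j * wv ^+ (n - j).

Definition psi (n : nat) : bipoly :=
  if n is 0 then cst (Num.sqrt (ip pp pp))^-1 * pp
  else cst (Num.sqrt (Dn n.+1 * Dn n))^-1 *
       \sum_(j < n.+1) pp * cst (Acof n n j) * zv ^+ j * wv ^+ (n - j).

Definition inner (k n : nat) : R := ip (wv ^+ k * phi n) (zv ^+ k * psi n).

Definition sigma_term (k n : nat) : R :=
  ((2 * (n%:R + 3 - k%:R) * (n%:R ^+ 2 + 5 * n%:R + 4 + 3 * k%:R - 3 * k%:R ^+ 2))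
    / (n.+1%:R * n.+2%:R * n.+3%:R * n.+4%:R)) ^+ 2.

End HardyBidisk.

(* Main.v *)
Require Import Defs.
From HB Require Import structures.
From mathcomp Require Import all_boot all_order all_algebra.
From mathcomp Require Import all_classical all_reals all_analysis.
From mathcomp Require Import ring lra zify.
Import Order.TTheory GRing.Theory Num.Theory numFieldNormedType.Exports.
Set Implicit Arguments. Unset Strict Implicit. Unset Printing Implicit Defensive.
Local Open Scope classical_set_scope.
Local Open Scope ring_scope.


Notation cst2 := Defs.cst.

Lemma coef2D (R : realType) (P Q : bipoly R) i j :
  coef2 (P + Q) i j = coef2 P i j + coef2 Q i j.
Proof. by rewrite /coef2 !coefD. Qed.

Lemma coef2N (R : realType) (P : bipoly R) i j :
  coef2 (- P) i j = - coef2 P i j.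
Proof. by rewrite /coef2 !coefN. Qed.

Lemma coef2B (R : realType) (P Q : bipoly R) i j :
  coef2 (P - Q) i j = coef2 P i j - coef2 Q i j.
Proof. by rewrite coef2D coef2N. Qed.

Lemma coef2C (R : realType) (c : R) (P : bipoly R) i j :
  coef2 (cst2 c * P) i j = c * coef2 P i j.
Proof. by rewrite /coef2 /Defs.cst coefCM coefCM. Qed.

Lemma coef2_sum (R : realType) (I : Type) (r : seq I) (F : I -> bipoly R) i j :
  coef2 (\sum_(x <- r) F x) i j = \sum_(x <- r) coef2 (F x) i j.
Proof. by rewrite /coef2 !coef_sum. Qed.

Lemma coef2z (R : realType) (P : bipoly R) i j :
  coef2 (zv R * P) i j = if i is i'.+1 then coef2 P i' j else 0.
Proof. by rewrite /coef2 /zv coefXM; case: i => [|i] //=; rewrite coef0. Qed.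

Lemma coef2w (R : realType) (P : bipoly R) i j :
  coef2 (wv R * P) i j = if j is j'.+1 then coef2 P i j' else 0.
Proof. by rewrite /coef2 /wv coefCM coefXM; case: j. Qed.

Lemma coef2_1 (R : realType) i j :
  coef2 (1 : bipoly R) i j = ((i == 0%N) && (j == 0%N))%:R.
Proof.
rewrite /coef2 coef1; case: eqP => _ /=; last by rewrite coef0.
by rewrite coef1.
Qed.

Lemma coef2zn (R : realType) (P : bipoly R) a i j :
  coef2 (zv R ^+ a * P) i j = if (a <= i)%N then coef2 P (i - a) j else 0.
Proof.
elim: a i => [|a IH] i; first by rewrite expr0 mul1r subn0.
rewrite exprS -mulrA coef2z; case: i => [|i] /=; first by [].
by rewrite ?IH ?subSS.
Qed.

Lemma coef2wn (R : realType) (P : bipoly R) b i j :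
  coef2 (wv R ^+ b * P) i j = if (b <= j)%N then coef2 P i (j - b) else 0.
Proof.
elim: b j => [|b IH] j; first by rewrite expr0 mul1r subn0.
rewrite exprS -mulrA coef2w; case: j => [|j] /=; first by [].
by rewrite ?IH ?subSS.
Qed.

Lemma coef2_mono (R : realType) a b i j :
  coef2 (zv R ^+ a * wv R ^+ b) i j = ((i == a) && (j == b))%:R.
Proof.
rewrite -(mulr1 (wv R ^+ b)) coef2zn coef2wn coef2_1.
case: (leqP a i) => ha; case: (leqP b j) => hb /=;
  repeat (case: eqP => ? /=); try lia; by [].
Qed.

Definition pat (R : realType) a b : bipoly R := pp R * zv R ^+ a * wv R ^+ b.

Definition cp (R : realType) (a b i j : nat) : R :=
  ((i == a.+2) && (j == b))%:R - 2 * ((i == a.+1) && (j == b.+1))%:R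
  + ((i == a) && (j == b.+2))%:R.

Lemma pat_expand (R : realType) a b :
  pat R a b = zv R ^+ a.+2 * wv R ^+ b - cst2 2 * (zv R ^+ a.+1 * wv R ^+ b.+1)
    + zv R ^+ a * wv R ^+ b.+2.
Proof.
rewrite /pat /pp /Defs.cst !exprS.
have -> : (2 : R)%:P%:P = 2 :> bipoly R by rewrite !polyC_natr.
ring.
Qed.

Lemma coef_pat (R : realType) a b i j : coef2 (pat R a b) i j = cp R a b i j.
Proof.
by rewrite pat_expand coef2D coef2B coef2C !coef2_mono.
Qed.

Lemma sum_ord_widen (R : realType) (F : nat -> R) m n : (m <= n)%N ->
  (forall i, (m <= i)%N -> (i < n)%N -> F i = 0) ->
  \sum_(i < m) F i = \sum_(i < n) F i.
Proof.
move=> mn H; rewrite -!(big_mkord xpredT) (big_cat_nat (leq0n m) mn) /=.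
rewrite [X in _ + X]big1_seq ?addr0 // => i /andP[_]; rewrite mem_index_iota.
by case/andP; apply: H.
Qed.

Definition ipB (R : realType) B (P Q : bipoly R) : R :=
  \sum_(i < B) \sum_(j < B) coef2 P i j * coef2 Q i j.

Lemma ip_bound (R : realType) B (P Q : bipoly R) :
  (forall i j, (B <= i)%N || (B <= j)%N -> coef2 P i j = 0) ->
  ip P Q = ipB B P Q.
Proof.
move=> H.
have hsz : (size P <= B)%N.
  apply/leq_sizeP => i hi; apply/polyP => j; rewrite coef0.
  by apply: H; rewrite hi.
have hsza : forall a : nat, (size (P`_a)%R <= B)%N.
  move=> a; apply/leq_sizeP => j hj; by apply: H; rewrite hj orbT.
rewrite /ip /ipB.
rewrite (sum_ord_widen (F := fun a => \sum_(b < size P`_a) coef2 P a b * coef2 Q a b) hsz).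
  apply: eq_bigr => a _.
  apply: (sum_ord_widen (F := fun b => coef2 P a b * coef2 Q a b)) => // j hj _.
  by rewrite /coef2 nth_default // mul0r.
move=> a ha _; rewrite /coef2.
have -> : P`_a = 0 := nth_default 0 ha.
by rewrite size_poly0 big_ord0.
Qed.

Lemma sum_delta (R : realType) (F : nat -> R) B y : (y < B)%N ->
  \sum_(j < B) ((j : nat) == y)%:R * F j = F y.
Proof.
move=> hy; rewrite (bigD1 (Ordinal hy)) //= eqxx mul1r big1 ?addr0 //.
move=> j /negbTE; rewrite -val_eqE /= => ->; by rewrite mul0r.
Qed.

Lemma sum2_delta (R : realType) (G : nat -> nat -> R) B x y :
  (x < B)%N -> (y < B)%N ->
  \sum_(i < B) \sum_(j < B) (((i : nat) == x) && ((j : nat) == y))%:R * G i j = G x y.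
Proof.
move=> hx hy.
transitivity (\sum_(i < B) ((i : nat) == x)%:R * \sum_(j < B) ((j : nat) == y)%:R * G i j).
  apply: eq_bigr => i _; rewrite mulr_sumr; apply: eq_bigr => j _.
  by rewrite -mulnb natrM mulrA.
by rewrite (sum_delta (fun i => \sum_(j < B) ((j : nat) == y)%:R * G i j) hx) sum_delta.
Qed.

Lemma sum2_split (R : realType) (F G : nat -> nat -> R) B :
  \sum_(i < B) \sum_(j < B) (F i j + G i j) =
  \sum_(i < B) \sum_(j < B) F i j + \sum_(i < B) \sum_(j < B) G i j.
Proof. by rewrite -big_split; apply: eq_bigr => i _; rewrite big_split. Qed.

Lemma sum2_scale (R : realType) (F : nat -> nat -> R) c B :
  \sum_(i < B) \sum_(j < B) (c * F i j) = c * \sum_(i < B) \sum_(j < B) F i j.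
Proof. by rewrite mulr_sumr; apply: eq_bigr => i _; rewrite mulr_sumr. Qed.

Lemma sum_cp (R : realType) (G : nat -> nat -> R) B a b :
  (a.+2 < B)%N -> (b.+2 < B)%N ->
  \sum_(i < B) \sum_(j < B) cp R a b i j * G i j =
  G a.+2 b - 2 * G a.+1 b.+1 + G a b.+2.
Proof.
move=> ha hb.
have -> : \sum_(i < B) \sum_(j < B) cp R a b i j * G i j =
  \sum_(i < B) \sum_(j < B) ((((i : nat) == a.+2) && ((j : nat) == b))%:R * G i j
   + ((-2) * ((((i : nat) == a.+1) && ((j : nat) == b.+1))%:R * G i j)
   + (((i : nat) == a) && ((j : nat) == b.+2))%:R * G i j)).
  by apply: eq_bigr => i _; apply: eq_bigr => j _; rewrite /cp; ring.
under eq_bigr => i _ do rewrite !big_split /=.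
rewrite !big_split /=.
rewrite [in X in _ + (X + _)](eq_bigr (fun i : 'I_B => -2 * \sum_(j < B) (((i : nat) == a.+1) && ((j : nat) == b.+1))%:R * G i j)); last first.
  by move=> i _; rewrite mulr_sumr.
rewrite -mulr_sumr !sum2_delta //; first ring.
all: lia.
Qed.

Definition Tn (R : realType) (a c : nat) : R :=
  6 * (a == c)%:R - 4 * (a == c.+1)%:R - 4 * (a.+1 == c)%:R
  + (a == c.+2)%:R + (a.+2 == c)%:R.

Lemma andb_deg x y u v : (x + y = u + v)%N -> ((x == u) && (y == v)) = (x == u).
Proof. move=> h; apply/andP/eqP => [[/eqP//]|e]; split; apply/eqP; lia. Qed.

Lemma ipB_pat (R : realType) B a b c d : (a + b = c + d)%N ->
  (a.+2 < B)%N -> (b.+2 < B)%N ->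
  ipB B (pat R a b) (pat R c d) = Tn R a c.
Proof.
move=> h ha hb; rewrite /ipB.
under eq_bigr => i _ do under eq_bigr => j _ do rewrite !coef_pat.
rewrite sum_cp // /cp /Tn.
rewrite !andb_deg; try lia.
rewrite !eqSS; ring.
Qed.


Ltac boolsolve := repeat (case: eqP => ?; try (exfalso; lia)); rewrite /=; ring.

Lemma cp_out (R : realType) B a b i j : (a.+2 < B)%N -> (b.+2 < B)%N ->
  (B <= i)%N || (B <= j)%N -> cp R a b i j = 0.
Proof. move=> ha hb h; rewrite /cp; boolsolve. Qed.

Lemma pat_out (R : realType) B a b i j : (a.+2 < B)%N -> (b.+2 < B)%N ->
  (B <= i)%N || (B <= j)%N -> coef2 (pat R a b) i j = 0.
Proof. by move=> ha hb h; rewrite coef_pat (cp_out _ ha hb h). Qed.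

Lemma Tn_sym (R : realType) a c : Tn R a c = Tn R c a.
Proof. rewrite /Tn; boolsolve. Qed.

Lemma Tn_absdiff (R : realType) (i j : nat) :
  Tn R 0 (maxn i j - minn i j) = Tn R i j.
Proof. rewrite /Tn; boolsolve. Qed.

Lemma AmxE (R : realType) n :
  Amx R n = \matrix_(i < n.+1, j < n.+1) Tn R i j.
Proof.
apply/matrixP => i j; rewrite !mxE -Tn_absdiff.
set d := (maxn i j - minn i j)%N.
have -> : pp R * wv R ^+ d = pat R 0 d by rewrite /pat expr0 mulr1.
have -> : pp R * zv R ^+ d = pat R d 0 by rewrite /pat expr0 mulr1.
rewrite (@ip_bound _ d.+3); last by move=> a b h; apply: pat_out h.
by rewrite ipB_pat // addn0.
Qed.

Definition gcut (R : realType) (f : nat -> R) N x : R := if (x < N)%N then f x else 0.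

Lemma sum_g (R : realType) (f : nat -> R) N (x : nat) :
  \sum_(j < N) f j * (x == (j : nat))%:R = gcut f N x.
Proof.
rewrite /gcut; case: (ltnP x N) => hx.
  rewrite (bigD1 (Ordinal hx)) //= eqxx mulr1 big1 ?addr0 //.
  move=> j /negbTE; rewrite -val_eqE /= eq_sym => ->; by rewrite mulr0.
apply: big1 => j _; have : (j < N)%N := ltn_ord j.
case: eqP => [e|_]; last by rewrite mulr0.
by rewrite -e; lia.
Qed.

Lemma lin5 (R : realType) (x a b c d e : R) :
  x * (6*a - 4*b - 4*c + d + e) = 6*(x*a) + (-4)*(x*b) + (-4)*(x*c) + x*d + x*e.
Proof. ring. Qed.

Lemma rowT (R : realType) (f : nat -> R) N i :
  \sum_(j < N) f j * Tn R i j =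
  6 * gcut f N i - 4 * (if i is i'.+1 then gcut f N i' else 0) - 4 * gcut f N i.+1
  + (if i is i'.+2 then gcut f N i' else 0) + gcut f N i.+2.
Proof.
case: i => [|[|i]].
- have E : forall j : nat, f j * Tn R 0 j =
    6 * (f j * (0 == j)%:R) + (-4) * (f j * (1 == j)%:R) + f j * (2 == j)%:R.
    by move=> j; rewrite /Tn /=; ring.
  under eq_bigr => j _ do rewrite E.
  by rewrite !big_split /= -!mulr_sumr !sum_g; ring.
- have E : forall j : nat, f j * Tn R 1 j =
    6 * (f j * (1 == j)%:R) + (-4) * (f j * (0 == j)%:R) + (-4) * (f j * (2 == j)%:R)
    + f j * (3 == j)%:R.
    by move=> j; rewrite /Tn /=; ring.
  under eq_bigr => j _ do rewrite E.
  by rewrite !big_split /= -!mulr_sumr !sum_g; ring.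
- have E : forall j : nat, f j * Tn R i.+2 j =
    6 * (f j * (i.+2 == j)%:R) + (-4) * (f j * (i.+1 == j)%:R) + (-4) * (f j * (i.+3 == j)%:R)
    + f j * (i == j)%:R + f j * (i.+4 == j)%:R.
    by move=> j; rewrite /Tn /=; ring.
  under eq_bigr => j _ do rewrite E.
  by rewrite !big_split /= -!mulr_sumr !sum_g; ring.
Qed.

Definition cub (R : realType) (n : nat) (x : R) : R :=
  (n%:R + 2) * (n%:R + 3) / 12 * ((x + 1) * (n%:R + 1 - x) * (n%:R + 2 - x)).
Arguments cub R n x : clear implicits.
Definition fc (R : realType) n := fun j : nat => cub R n j%:R.
Definition fr (R : realType) n := fun j : nat => cub R n (n%:R - j%:R).
Definition dd (R : realType) (n : nat) : R :=
  (n%:R + 1) * (n%:R + 2) ^+ 2 * (n%:R + 3) / 12.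

Lemma gcut_in (R : realType) (f : nat -> R) N x : (x < N)%N -> gcut f N x = f x.
Proof. by rewrite /gcut => ->. Qed.
Lemma gcut_out (R : realType) (f : nat -> R) N x : (N <= x)%N -> gcut f N x = 0.
Proof. by rewrite /gcut ltnNge => ->. Qed.

Lemma gcut_fc (R : realType) n x : (x <= n.+2)%N -> gcut (fc R n) n.+1 x = fc R n x.
Proof.
move=> h; case: (ltnP x n.+1) => h2; first by rewrite gcut_in.
rewrite gcut_out //; have [->|->] : x = n.+1 \/ x = n.+2 by lia.
  by rewrite /fc /cub -!natr1; ring.
by rewrite /fc /cub -!natr1; ring.
Qed.

Lemma gcut_fr (R : realType) n x : (x <= n.+1)%N -> gcut (fr R n) n.+1 x = fr R n x.
Proof.
move=> h; case: (ltnP x n.+1) => h2; first by rewrite gcut_in.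
rewrite gcut_out //; have -> : x = n.+1 by lia.
by rewrite /fr /cub -!natr1; ring.
Qed.

Lemma row_fc (R : realType) n i : (i <= n)%N ->
  \sum_(j < n.+1) fc R n j * Tn R i j = (i == 0%N)%:R * dd R n.+1.
Proof.
move=> hi; rewrite rowT; case: i hi => [|[|i]] hi /=; rewrite !gcut_fc; try lia;
  rewrite /fc /cub /dd -!natr1; ring.
Qed.

Lemma row_fr (R : realType) n i : (i <= n)%N ->
  \sum_(j < n.+1) fr R n j * Tn R i j = (i == n)%:R * dd R n.+1.
Proof.
move=> hi; rewrite rowT; case: (ltnP i n) => hin.
  have -> : (i == n) = false by apply/eqP; lia.
  case: i hi hin => [|[|i]] hi hin /=; rewrite !gcut_fr; try lia;
    rewrite /fr /cub /dd -!natr1; ring.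
have e : i = n by lia.
subst i; rewrite eqxx (@gcut_out _ _ _ n.+2) //.
case: n hi hin => [|[|n]] hi hin /=; rewrite !gcut_fr; try lia;
  rewrite /fr /cub /dd -!natr1; ring.
Qed.


Lemma adj_solve (R : realType) m (A : 'M[R]_m) (v : 'cV_m) i d :
  A *m v = d *: delta_mx i 0 -> forall j, \det A * v j 0 = d * cofactor A i j.
Proof.
move=> H j; have := congr1 (mulmx (\adj A)) H.
rewrite mulmxA mul_adj_mx mul_scalar_mx -scalemxAr -colE => /matrixP /(_ j 0).
by rewrite !mxE.
Qed.

Lemma dd_gt0 (R : realType) n : 0 < dd R n.
Proof.
have h : 0 <= n%:R :> R := ler0n _ _.
rewrite /dd; apply: divr_gt0; last lra.
apply: mulr_gt0; last lra.
apply: mulr_gt0; first lra.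
apply: exprn_gt0; lra.
Qed.

Lemma Tn_SS (R : realType) a c : Tn R a.+1 c.+1 = Tn R a c.
Proof. by rewrite /Tn !eqSS. Qed.

Lemma cof00 (R : realType) n : cofactor (Amx R n.+1) 0 0 = \det (Amx R n).
Proof.
rewrite /cofactor /= expr0 mul1r; congr (\det _).
apply/matrixP => i j; rewrite !AmxE !mxE !lift0 /=.
by rewrite Tn_SS.
Qed.

Lemma Amx_fc (R : realType) n :
  Amx R n *m (\col_(j < n.+1) fc R n j) = dd R n.+1 *: delta_mx 0 0.
Proof.
apply/matrixP => i k; rewrite !mxE (ord1 k) eqxx andbT.
have -> : (i == 0) = ((i : nat) == 0%N) by rewrite -val_eqE.
rewrite mulrC -(@row_fc R n i (ltn_ord i)).
apply: eq_bigr => j _; rewrite AmxE !mxE mulrC; done.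
Qed.

Lemma Amx_fr (R : realType) n :
  Amx R n *m (\col_(j < n.+1) fr R n j) = dd R n.+1 *: delta_mx ord_max 0.
Proof.
apply/matrixP => i k; rewrite !mxE (ord1 k) eqxx andbT.
have -> : (i == ord_max) = ((i : nat) == n) by rewrite -val_eqE.
rewrite mulrC -(@row_fr R n i (ltn_ord i)).
apply: eq_bigr => j _; rewrite AmxE !mxE mulrC; done.
Qed.

Lemma detA (R : realType) n : \det (Amx R n) = dd R n.+1.
Proof.
elim: n => [|n IH].
  have := adj_solve (Amx_fc R 0) 0.
  rewrite !mxE /cofactor /= expr0 mul1r det_mx00.
  have -> : fc R 0 0 = 1 by rewrite /fc /cub; field.
  by rewrite !mulr1.
have := adj_solve (Amx_fc R n.+1) 0.
rewrite !mxE cof00 IH.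
have -> : fc R n.+1 0 = dd R n.+1 by rewrite /fc /cub /dd -!natr1; ring.
move=> h; apply: (mulIf (lt0r_neq0 (dd_gt0 R n.+1))).
by rewrite h mulrC.
Qed.

Lemma Dn_dd (R : realType) n : Dn R n = dd R n.
Proof.
case: n => [|n]; last by rewrite /= detA.
by rewrite /Dn /dd; field.
Qed.

Lemma Acof0 (R : realType) n j : (j <= n)%N -> Acof R n 0 j = fc R n j.
Proof.
move=> hj; have := adj_solve (Amx_fc R n) (inord j).
rewrite detA !mxE inordK // => h.
apply: (mulfI (lt0r_neq0 (dd_gt0 R n.+1))).
rewrite /Acof; have -> : (inord 0%N : 'I_n.+1) = 0 by apply/val_inj; rewrite /= inordK.
by rewrite h.
Qed.

Lemma Acofn (R : realType) n j : (j <= n)%N -> Acof R n n j = fr R n j.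
Proof.
move=> hj; have := adj_solve (Amx_fr R n) (inord j).
rewrite detA !mxE inordK // => h.
apply: (mulfI (lt0r_neq0 (dd_gt0 R n.+1))).
rewrite /Acof; have -> : (inord n : 'I_n.+1) = ord_max by apply/val_inj; rewrite /= inordK.
by rewrite h.
Qed.


Definition s1 (R : realType) n : R := cub R n (n%:R - 1) - 4 * fc R n n.

Lemma d4_fc (R : realType) n m : 6 * fc R n m.+2 - 4 * fc R n m.+1 - 4 * fc R n m.+3 + fc R n m + fc R n m.+4 = 0.
Proof. rewrite /fc /cub -!natr1; ring. Qed.

Lemma s1_id (R : realType) m : 6 * fc R m.+1 m.+2 - 4 * fc R m.+1 m.+1 - 4 * fc R m.+1 m.+3
  + fc R m.+1 m = s1 R m.+1.
Proof. rewrite /s1 /fc /cub -!natr1; ring. Qed.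

Lemma colS (R : realType) n m : (2 <= m)%N ->
  \sum_(j < n.+1) fc R n j * Tn R j m =
  (m == n.+1)%:R * s1 R n + (m == n.+2)%:R * fc R n n.
Proof.
move=> hm.
under eq_bigr => j _ do rewrite Tn_sym.
rewrite rowT; case: m hm => [|[|m]] // _ /=.
case: (leqP m.+4 n.+2) => h1.
  rewrite !gcut_fc; try lia.
  have -> : (m.+2 == n.+1) = false by apply/eqP; lia.
  have -> : (m.+2 == n.+2) = false by apply/eqP; lia.
  rewrite /= !mul0r !addr0; exact: d4_fc.
have [e|[e|e]] : n = m.+1 \/ n = m \/ (n < m)%N by lia.
- subst n; rewrite eqxx (_ : (m.+2 == m.+3) = false); last by apply/eqP; lia.
  rewrite (@gcut_out _ _ _ m.+4); last lia.
  rewrite !gcut_fc; try lia.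
  rewrite /= mul0r mul1r !addr0; exact: s1_id.
- subst n; rewrite eqxx (_ : (m.+2 == m.+1) = false); last by apply/eqP; lia.
  rewrite (@gcut_out _ _ _ m.+1) ?(@gcut_out _ _ _ m.+2) ?(@gcut_out _ _ _ m.+3)
    ?(@gcut_out _ _ _ m.+4) ?gcut_in; try lia.
  by rewrite /= mul0r mul1r !mulr0 !subr0 !addr0 add0r.
- rewrite (_ : (m.+2 == n.+1) = false); last by apply/eqP; lia.
  rewrite (_ : (m.+2 == n.+2) = false); last by apply/eqP; lia.
  by rewrite !gcut_out /= ?mul0r ?mulr0 ?subr0 ?addr0 //; lia.
Qed.

Lemma sum_shift (R : realType) (f : nat -> R) N (k x : nat) :
  \sum_(l < N) f l * ((l + k)%N == x)%:R = if (k <= x)%N then gcut f N (x - k) else 0.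
Proof.
case: (leqP k x) => h.
  rewrite -sum_g; apply: eq_bigr => l _; congr (_ * (nat_of_bool _)%:R).
  by apply/eqP/eqP; lia.
apply: big1 => l _; rewrite (_ : ((l + k)%N == x) = false) ?mulr0 //.
by apply/eqP; lia.
Qed.

Lemma cst2_1 (R : realType) : cst2 (1 : R) = 1.
Proof. by rewrite /Defs.cst !polyC1. Qed.

Lemma ip_pp (R : realType) : ip (pp R) (pp R) = 6.
Proof.
have -> : pp R = pat R 0 0 by rewrite /pat !expr0 !mulr1.
rewrite (@ip_bound _ 3); last by move=> a b h; apply: pat_out h.
by rewrite ipB_pat // /Tn /=; ring.
Qed.

Definition nrm (R : realType) n : R := (Num.sqrt (dd R n.+1 * dd R n))^-1.

Lemma phiE (R : realType) n :
  phi R n = cst2 (nrm R n) * \sum_(j < n.+1) cst2 (fc R n j) * pat R j (n - j).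
Proof.
case: n => [|n].
  rewrite /phi /nrm ip_pp big_ord1 /=.
  have -> : fc R 0 0 = 1 by rewrite /fc /cub; field.
  have -> : dd R 1 * dd R 0 = 6 by rewrite /dd; field.
  by rewrite cst2_1 mul1r /pat !expr0 !mulr1.
rewrite /phi /nrm !Dn_dd; congr (_ * _); apply: eq_bigr => j _.
rewrite Acof0; last by rewrite -ltnS.
by rewrite /pat; ring.
Qed.

Lemma psiE (R : realType) n :
  psi R n = cst2 (nrm R n) * \sum_(j < n.+1) cst2 (fr R n j) * pat R j (n - j).
Proof.
case: n => [|n].
  rewrite /psi /nrm ip_pp big_ord1 /=.
  have -> : fr R 0 0 = 1 by rewrite /fr /cub; field.
  have -> : dd R 1 * dd R 0 = 6 by rewrite /dd; field.
  by rewrite cst2_1 mul1r /pat !expr0 !mulr1.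
rewrite /psi /nrm !Dn_dd; congr (_ * _); apply: eq_bigr => j _.
rewrite Acofn; last by rewrite -ltnS.
by rewrite /pat; ring.
Qed.

Lemma ipB_CL (R : realType) B c (P Q : bipoly R) : ipB B (cst2 c * P) Q = c * ipB B P Q.
Proof.
rewrite /ipB mulr_sumr; apply: eq_bigr => i _; rewrite mulr_sumr; apply: eq_bigr => j _.
by rewrite coef2C mulrA.
Qed.

Lemma ipB_CR (R : realType) B c (P Q : bipoly R) : ipB B P (cst2 c * Q) = c * ipB B P Q.
Proof.
rewrite /ipB mulr_sumr; apply: eq_bigr => i _; rewrite mulr_sumr; apply: eq_bigr => j _.
by rewrite coef2C mulrCA.
Qed.

Lemma ipB_sumL (R : realType) B N (F : 'I_N -> bipoly R) Q :
  ipB B (\sum_(x < N) F x) Q = \sum_(x < N) ipB B (F x) Q.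
Proof.
rewrite /ipB [RHS]exchange_big; apply: eq_bigr => i _.
rewrite [RHS]exchange_big; apply: eq_bigr => j _.
by rewrite coef2_sum mulr_suml.
Qed.

Lemma ipB_sumR (R : realType) B N (F : 'I_N -> bipoly R) P :
  ipB B P (\sum_(x < N) F x) = \sum_(x < N) ipB B P (F x).
Proof.
rewrite /ipB [RHS]exchange_big; apply: eq_bigr => i _.
rewrite [RHS]exchange_big; apply: eq_bigr => j _.
by rewrite coef2_sum mulr_sumr.
Qed.

Lemma wv_pat (R : realType) k a b : wv R ^+ k * pat R a b = pat R a (b + k).
Proof. by rewrite /pat exprD; ring. Qed.

Lemma zv_pat (R : realType) k a b : zv R ^+ k * pat R a b = pat R (a + k) b.
Proof. by rewrite /pat exprD; ring. Qed.

Lemma inner_sum (R : realType) k n :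
  inner R k n = nrm R n * nrm R n *
    \sum_(l < n.+1) fr R n l * \sum_(j < n.+1) fc R n j * Tn R j (l + k).
Proof.
rewrite /inner phiE psiE.
have hW : wv R ^+ k * (cst2 (nrm R n) * \sum_(j < n.+1) cst2 (fc R n j) * pat R j (n - j))
  = cst2 (nrm R n) * \sum_(j < n.+1) cst2 (fc R n j) * pat R j (n - j + k).
  rewrite mulrCA mulr_sumr; congr (_ * _); apply: eq_bigr => j _.
  by rewrite mulrCA wv_pat.
have hZ : zv R ^+ k * (cst2 (nrm R n) * \sum_(j < n.+1) cst2 (fr R n j) * pat R j (n - j))
  = cst2 (nrm R n) * \sum_(j < n.+1) cst2 (fr R n j) * pat R (j + k) (n - j).
  rewrite mulrCA mulr_sumr; congr (_ * _); apply: eq_bigr => j _.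
  by rewrite mulrCA zv_pat.
rewrite hW hZ (@ip_bound _ (n + k).+3); last first.
  move=> a b h; rewrite coef2C coef2_sum big1 ?mulr0 // => j _.
  rewrite coef2C (@pat_out _ (n + k).+3) ?mulr0 //.
    by have := ltn_ord j; lia.
  by have := ltn_ord j; lia.
rewrite ipB_CL ipB_CR ipB_sumL mulrA; congr (_ * _).
under [RHS]eq_bigr => l _ do rewrite mulr_sumr.
rewrite [RHS]exchange_big /=; apply: eq_bigr => j _.
rewrite ipB_CL ipB_sumR mulr_sumr; apply: eq_bigr => l _.
rewrite ipB_CR ipB_pat.
- by rewrite mulrCA mulrA.
- by have := ltn_ord j; have := ltn_ord l; lia.
- by have := ltn_ord j; lia.
- by have := ltn_ord j; lia.
Qed.


Lemma nrm2 (R : realType) n : nrm R n * nrm R n = (dd R n.+1 * dd R n)^-1.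
Proof.
rewrite /nrm -invfM -expr2 sqr_sqrtr //.
by apply: mulr_ge0; apply: ltW; apply: dd_gt0.
Qed.

Lemma inner_cf (R : realType) k n : (2 <= k)%N ->
  inner R k n = (dd R n.+1 * dd R n)^-1 *
   ((if (k <= n.+1)%N then gcut (fr R n) n.+1 (n.+1 - k) else 0) * s1 R n
  + (if (k <= n.+2)%N then gcut (fr R n) n.+1 (n.+2 - k) else 0) * fc R n n).
Proof.
move=> hk; rewrite inner_sum nrm2; congr (_ * _).
have E : forall l : 'I_n.+1, fr R n l * \sum_(j < n.+1) fc R n j * Tn R j (l + k) =
  (fr R n l * ((l + k)%N == n.+1)%:R) * s1 R n + (fr R n l * ((l + k)%N == n.+2)%:R) * fc R n n.
  by move=> l; rewrite colS; [ring | lia].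
under eq_bigr => l _ do rewrite E.
by rewrite big_split /= -!mulr_suml !sum_shift.
Qed.

Lemma s1_neg (R : realType) n : s1 R n = - fc R n.+1 n.+1.
Proof. rewrite /s1 /fc /cub -!natr1; ring. Qed.

Theorem part1 (R : realType) :
  (forall k n : nat, (2 <= k)%N ->
     inner R k n =
       if (n + 3 <= k)%N then 0
       else if n == (k - 2)%N then
         Acof R n 0 n * Acof R n n 0 / (Dn R n * Dn R n.+1)
       else
         (- Acof R n.+1 0 n.+1 * Acof R n n (n + 1 - k)
          + Acof R n 0 n * Acof R n n (n + 2 - k)) / (Dn R n * Dn R n.+1)).
Proof.
move=> k n hk; rewrite inner_cf // !Dn_dd.
case: (leqP (n + 3) k) => h3.
  have -> : (k <= n.+1)%N = false by apply/negbTE; rewrite -ltnNge; lia.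
  have -> : (k <= n.+2)%N = false by apply/negbTE; rewrite -ltnNge; lia.
  by rewrite !mul0r addr0 mulr0.
case: (eqVneq n (k - 2)%N) => h2.
  have ek : k = n.+2 by lia.
  subst k.
  have -> : (n.+2 <= n.+1)%N = false by apply/negbTE; rewrite -ltnNge; lia.
  rewrite leqnn subnn gcut_in // Acof0 // Acofn //.
  rewrite mul0r add0r (mulrC (dd R n)); ring.
have -> : (k <= n.+1)%N by lia.
have -> : (k <= n.+2)%N by lia.
rewrite !gcut_in; try lia.
rewrite Acof0 // Acof0 // Acofn; last lia.
rewrite Acofn; last lia.
rewrite s1_neg (mulrC (dd R n)) addn1 addn2; ring.
Qed.


Definition base (R : realType) (k n : nat) : R :=
  (2 * (n%:R + 3 - k%:R) * (n%:R ^+ 2 + 5 * n%:R + 4 + 3 * k%:R - 3 * k%:R ^+ 2))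
    / (n.+1%:R * n.+2%:R * n.+3%:R * n.+4%:R).

Lemma sigma_base (R : realType) k n : sigma_term R k n = base R k n ^+ 2.
Proof. by []. Qed.

Lemma inner_base (R : realType) k n : (3 <= k)%N -> (k - 2 <= n)%N ->
  inner R k n = - base R k n.
Proof.
move=> hk hn; rewrite inner_cf; last lia.
have h0 : 0 <= n%:R :> R := ler0n _ _.
case: (eqVneq k n.+2) => ek.
  subst k.
  have -> : (n.+2 <= n.+1)%N = false by apply/negbTE; rewrite -ltnNge; lia.
  rewrite leqnn subnn gcut_in //.
  rewrite /fr /fc /s1 /cub /dd /base -!natr1.
  field; repeat (apply/andP; split); apply/eqP; lra.
have -> : (k <= n.+1)%N by lia.
have -> : (k <= n.+2)%N by lia.
rewrite !gcut_in; try lia.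
rewrite /fr /s1 /fc /cub /dd /base !natrB; try lia.
rewrite -!natr1.
field; repeat (apply/andP; split); apply/eqP; lra.
Qed.


Definition Mk (R : realType) (K : R) : R := 4 * (1 + K) ^+ 2 * (1 + 3 * K + 3 * K ^+ 2) ^+ 2.

Lemma base_bound_R (R : realType) (K x : R) : 0 <= K -> 0 <= x ->
  ((2 * (x + 3 - K) * (x ^+ 2 + 5 * x + 4 + 3 * K - 3 * K ^+ 2)) /
     ((x + 1) * (x + 2) * (x + 3) * (x + 4))) ^+ 2 <= Mk K / ((x + 1) * (x + 2)).
Proof.
move=> hK hx.
set a := x + 3 - K.
set Y := (x + 1) * (x + 4).
have eP : x ^+ 2 + 5 * x + 4 + 3 * K - 3 * K ^+ 2 = Y + 3 * K - 3 * K ^+ 2 by rewrite /Y; ring.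
rewrite eP.
set P := Y + 3 * K - 3 * K ^+ 2.
set A := (1 + K) * (x + 3).
set Bc := (1 + 3 * K + 3 * K ^+ 2) * Y.
have hY : 4 <= Y by rewrite /Y; nra.
have ha : a ^+ 2 <= A ^+ 2.
  have e : A ^+ 2 - a ^+ 2 = (K * (x + 3) + K) * (2 * (x + 3) + K * (x + 2)) by rewrite /A /a; ring.
  have : 0 <= (K * (x + 3) + K) * (2 * (x + 3) + K * (x + 2)) by apply: mulr_ge0; nra.
  lra.
have hP : P ^+ 2 <= Bc ^+ 2.
  have e : Bc ^+ 2 - P ^+ 2 = (3 * K * (Y - 1) + 3 * K ^+ 2 * (Y + 1)) *
      (2 * Y + 3 * K * (Y + 1) + 3 * K ^+ 2 * (Y - 1)) by rewrite /Bc /P; ring.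
  have hK2 : 0 <= K ^+ 2 by apply: sqr_ge0.
  have : 0 <= (3 * K * (Y - 1) + 3 * K ^+ 2 * (Y + 1)) *
      (2 * Y + 3 * K * (Y + 1) + 3 * K ^+ 2 * (Y - 1)) by apply: mulr_ge0; nra.
  lra.
have hden : 0 < (x + 1) * (x + 2) * (x + 3) * (x + 4).
  by apply: mulr_gt0; [apply: mulr_gt0; [apply: mulr_gt0|]|]; lra.
rewrite expr_div_n.
apply: (@le_trans _ _ (4 * (A ^+ 2 * Bc ^+ 2) / ((x + 1) * (x + 2) * (x + 3) * (x + 4)) ^+ 2)).
  apply: ler_wpM2r; first by rewrite invr_ge0; apply: exprn_ge0; apply: ltW.
  rewrite (_ : (2 * a * P) ^+ 2 = 4 * (a ^+ 2 * P ^+ 2)); last by ring.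
  apply: ler_wpM2l; first lra.
  apply: ler_pM => //; apply: sqr_ge0.
have -> : 4 * (A ^+ 2 * Bc ^+ 2) / ((x + 1) * (x + 2) * (x + 3) * (x + 4)) ^+ 2
   = Mk K / ((x + 2) ^+ 2).
  rewrite /A /Bc /Y /Mk; field.
  by repeat (apply/andP; split); apply/eqP; lra.
apply: ler_wpM2l; first by rewrite /Mk; apply: mulr_ge0; [apply: mulr_ge0|]; 
  [lra | apply: sqr_ge0 | apply: sqr_ge0].
rewrite lef_pV2 ?posrE; first nra.
all: first [by apply: mulr_gt0; lra | by apply: exprn_gt0; lra | idtac].

Qed.

Lemma base_bound (R : realType) k n :
  base R k n ^+ 2 <= Mk (k%:R : R) / (n.+1%:R * n.+2%:R).
Proof.
have := @base_bound_R R k%:R n%:R (ler0n _ _) (ler0n _ _).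
have h1 : n.+1%:R = n%:R + 1 :> R by rewrite -natr1.
have h2 : n.+2%:R = n%:R + 2 :> R by rewrite -!natr1; ring.
have h3 : n.+3%:R = n%:R + 3 :> R by rewrite -!natr1; ring.
have h4 : n.+4%:R = n%:R + 4 :> R by rewrite -!natr1; ring.
by rewrite /base h1 h2 h3 h4.
Qed.


Lemma inner_small (R : realType) k n : (2 <= k)%N -> (n < k - 2)%N -> inner R k n = 0.
Proof.
move=> hk hn; rewrite (part1 R) //.
by have -> : (n + 3 <= k)%N by lia.
Qed.

Lemma term_eq (R : realType) k n : (3 <= k)%N -> (k - 2 <= n)%N ->
  `|inner R k n| ^+ 2 = sigma_term R k n.
Proof.
move=> hk hn; rewrite real_normK ?num_real // inner_base // sqrrN.
by rewrite sigma_base.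
Qed.

Lemma Mk_ge0 (R : realType) (K : R) : 0 <= K -> 0 <= Mk K.
Proof.
move=> hK; rewrite /Mk; apply: mulr_ge0; [apply: mulr_ge0|]; 
  [lra | apply: sqr_ge0 | apply: sqr_ge0].
Qed.

Lemma term_bound (R : realType) k n : (3 <= k)%N ->
  `|inner R k n| ^+ 2 <= Mk (k%:R : R) / (n.+1%:R * n.+2%:R).
Proof.
move=> hk; case: (ltnP n (k - 2)) => hn.
  rewrite inner_small //; last lia.
  rewrite normr0 expr0n /=; apply: divr_ge0; first by apply: Mk_ge0.
  by apply: mulr_ge0.
by rewrite term_eq // sigma_base; apply: base_bound.
Qed.

Lemma tel (R : realType) N :
  \sum_(0 <= n < N) (n.+1%:R * n.+2%:R : R)^-1 = 1 - (N.+1%:R)^-1.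
Proof.
elim: N => [|N IH]; first by rewrite big_geq // invr1 subrr.
rewrite big_nat_recr //= IH -!natr1.
field; repeat (apply/andP; split); apply/eqP;
  have := ler0n R N; lra.
Qed.

Theorem part2 (R : realType) :
  (forall k : nat, (3 <= k)%N ->
     exists L : R,
       ((fun N : nat => \sum_(0 <= n < N) `|inner R k n| ^+ 2) @ \oo --> L)
       /\ ((fun N : nat => \sum_(k - 2 <= n < N) sigma_term R k n) @ \oo --> L)).
Proof.
move=> k hk.
set u := fun N : nat => \sum_(0 <= n < N) `|inner R k n| ^+ 2.
have mono : {homo u : n m / (n <= m)%N >-> n <= m}.
  apply/nondecreasing_seqP => N; rewrite /u big_nat_recr //=.
  by rewrite lerDl; apply: sqr_ge0.
have bnd : has_ubound (range u).
  exists (Mk (k%:R : R)) => _ [N _ <-].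
  apply: (@le_trans _ _ (\sum_(0 <= n < N) Mk (k%:R : R) / (n.+1%:R * n.+2%:R))).
    by apply: ler_sum => n _; apply: term_bound.
  rewrite -mulr_sumr tel; apply: ler_piMr; first by apply: Mk_ge0.
  rewrite lerBlDr lerDl invr_ge0; apply: ler0n.
have hu := nondecreasing_cvgn mono bnd.
exists (sup (range u)); split; first exact: hu.
apply: cvg_trans hu; apply: near_eq_cvg; near=> N.
have hN : (k - 2 <= N)%N by near: N; exact: nbhs_infty_ge.
rewrite /u (big_cat_nat (n := (k - 2)%N)) //= big1_seq ?add0r.
  by apply: eq_big_nat => n /andP [h1 h2]; rewrite term_eq.
move=> n /andP [_]; rewrite mem_index_iota => /andP [_ hn].
by rewrite inner_small ?normr0 ?expr0n //; lia.
Unshelve. all: by end_near.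
Qed.


Unset Implicit Arguments.

Theorem mainTheorem8 (R : realType) :
  (forall k n : nat, (2 <= k)%N ->
     inner R k n =
       if (n + 3 <= k)%N then 0
       else if n == (k - 2)%N then
         Acof R n 0 n * Acof R n n 0 / (Dn R n * Dn R n.+1)
       else
         (- Acof R n.+1 0 n.+1 * Acof R n n (n + 1 - k)
          + Acof R n 0 n * Acof R n n (n + 2 - k)) / (Dn R n * Dn R n.+1))
  /\
  (forall k : nat, (3 <= k)%N ->
     exists L : R,
       ((fun N : nat => \sum_(0 <= n < N) `|inner R k n| ^+ 2) @ \oo --> L)
       /\ ((fun N : nat => \sum_(k - 2 <= n < N) sigma_term R k n) @ \oo --> L)).
Proof. split; [exact: part1 | exact: part2]. Qed.
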